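(* Let $\mathbf{u}$ be a quasi-definite linear functional with SMOP $(P_n)_{n\ge0}$ and associated polynomials of the first kind $(P^{(1)}_n)_{n\ge0}$, let $c\in\mathbb{C}$, and let $\widehat{\mathbf{u}}$ be a linear functional with $\mathbf{u}=(x-c)^2\widehat{\mathbf{u}}$. Put $S_n(x)=(\widehat{\mathbf{u}}_1-c\widehat{\mathbf{u}}_0)P_n(x)+\mathbf{u}_0P^{(1)}_{n-1}(x)$ for $n\ge0$ and, for $n\ge2$, $$d_n^*=\det\begin{pmatrix}S_{n-2}(c)&S_{n-1}(c)\\ S_{n-2}'(c)+\widehat{\mathbf{u}}_0P_{n-2}(c)&S_{n-1}'(c)+\widehat{\mathbf{u}}_0P_{n-1}(c)\end{pmatrix}.$$ Then $\widehat{\mathbf{u}}$ is quasi-definite if and only if $\widehat{\mathbf{u}}_0\neq0$ and $d_n^*\neq0$ for all $n\ge2$. In that case its SMOP $(Q_n)_{n\ge0}$ is given by $Q_0=1$, $Q_1(x)=x-\widehat{\mathbf{u}}_1/\widehat{\mathbf{u}}_0$, and for $n\ge2$ $$Q_n(x)=\frac{1}{d_n^*}\det\begin{pmatrix}P_n(x)&P_{n-1}(x)&P_{n-2}(x)\\ S_n'(c)+\widehat{\mathbf{u}}_0P_n(c)&S_{n-1}'(c)+\widehat{\mathbf{u}}_0P_{n-1}(c)&S_{n-2}'(c)+\widehat{\mathbf{u}}_0P_{n-2}(c)\\ S_n(c)&S_{n-1}(c)&S_{n-2}(c)\end{pmatrix}.$$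
   Context: Linear functionals on the complex polynomials $\mathbb{P}$, moments $\mathbf{u}_n=\langle\mathbf{u},x^n\rangle$, $\langle(x-c)^2\widehat{\mathbf{u}},p\rangle=\langle\widehat{\mathbf{u}},(x-c)^2p\rangle$. A functional is quasi-definite if all leading principal submatrices of its Hankel moment matrix $(\mathbf{u}_{i+j})_{i,j\ge0}$ are nonsingular; it then has a unique sequence of monic orthogonal polynomials (SMOP) $(P_n)$, $\deg P_n=n$, $\langle\mathbf{u},P_nP_m\rangle=K_n\delta_{nm}$, $K_n\ne0$, with recurrence $xP_n=P_{n+1}+b_nP_n+a_nP_{n-1}$, $P_{-1}=0,P_0=1$, $a_n\neq0$. The associated polynomials of the first kind are the monic polynomials with $xP^{(1)}_n=P^{(1)}_{n+1}+b_{n+1}P^{(1)}_n+a_{n+1}P^{(1)}_{n-1}$, $P^{(1)}_{-1}=0$, $P^{(1)}_0=1$. *)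

(* Defs.v *)
From HB Require Import structures.
From mathcomp Require Import all_boot all_order all_algebra.
From mathcomp Require Import complex reals.
Set Implicit Arguments. Unset Strict Implicit. Unset Printing Implicit Defensive.
Import Order.TTheory GRing.Theory Num.Theory.
Local Open Scope ring_scope.

Section Defs.
Variable C : fieldType.

(* A linear functional on C[x] is encoded by its moment sequence u : nat -> C;
   its action on p is <u, p> = \sum_i p_i u_i. *)
Definition act (u : nat -> C) (p : {poly C}) : C :=
  \sum_(i < size p) p`_i * u i.

Definition hankel (u : nat -> C) (n : nat) : 'M[C]_n :=
  \matrix_(i < n, j < n) u (i + j)%N.

Definition quasi_definite (u : nat -> C) : Prop :=
  forall n : nat, \det (hankel u n.+1) != 0.

Definition is_SMOP (u : nat -> C) (P : nat -> {poly C}) : Prop :=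
  [/\ forall n, P n \is monic,
      forall n, size (P n) = n.+1,
      forall n m, n <> m -> act u (P n * P m) = 0
    & forall n, act u (P n * P n) != 0].

Definition TTRR (P : nat -> {poly C}) (a b : nat -> C) : Prop :=
  'X * P 0%N = P 1%N + b 0%N *: P 0%N /\
  forall n, 'X * P n.+1 = P n.+2 + b n.+1 *: P n.+1 + a n.+1 *: P n.

Definition assoc_first_kind (a b : nat -> C) (P1 : nat -> {poly C}) : Prop :=
  [/\ P1 0%N = 1,
      'X * P1 0%N = P1 1%N + b 1%N *: P1 0%N
    & forall n, 'X * P1 n.+1 = P1 n.+2 + b n.+2 *: P1 n.+1 + a n.+2 *: P1 n].

(* P^{(1)}_{n-1}, with P^{(1)}_{-1} = 0 *)
Definition P1m (P1 : nat -> {poly C}) (n : nat) : {poly C} :=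
  if n is n'.+1 then P1 n' else 0.

Definition Sn (u uh : nat -> C) (c : C) (P P1 : nat -> {poly C}) (n : nat) :=
  (uh 1%N - c * uh 0%N) *: P n + u 0%N *: P1m P1 n.

Definition Tn (u uh : nat -> C) (c : C) (P P1 : nat -> {poly C}) (n : nat) : C :=
  (Sn u uh c P P1 n)^`().[c] + uh 0%N * (P n).[c].

Definition mx2 (R : nzRingType) (rows : seq (seq R)) : 'M[R]_2 :=
  \matrix_(i < 2, j < 2) nth 0 (nth [::] rows i) j.
Definition mx3 (R : nzRingType) (rows : seq (seq R)) : 'M[R]_3 :=
  \matrix_(i < 3, j < 3) nth 0 (nth [::] rows i) j.

Definition dstar (u uh : nat -> C) (c : C) (P P1 : nat -> {poly C}) (n : nat) : C :=
  let S k := (Sn u uh c P P1 k).[c] in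
  let T k := Tn u uh c P P1 k in
  \det (mx2 [:: [:: S (n-2)%N; S (n-1)%N]; [:: T (n-2)%N; T (n-1)%N]]).

Definition Qdet (u uh : nat -> C) (c : C) (P P1 : nat -> {poly C}) (n : nat)
  : {poly C} :=
  let S k := (Sn u uh c P P1 k).[c] in
  let T k := Tn u uh c P P1 k in
  \det (mx3 [:: [:: P n; P (n-1)%N; P (n-2)%N];
               [:: (T n)%:P; (T (n-1)%N)%:P; (T (n-2)%N)%:P];
               [:: (S n)%:P; (S (n-1)%N)%:P; (S (n-2)%N)%:P]]).
End Defs.

(* Main.v *)
Require Import Defs.
From HB Require Import structures.
From mathcomp Require Import all_boot all_order all_algebra.
From mathcomp Require Import complex reals.
From mathcomp Require Import ring zify.
Set Implicit Arguments. Unset Strict Implicit. Unset Printing Implicit Defensive.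
Import Order.TTheory GRing.Theory Num.Theory.
Local Open Scope ring_scope.
Lemma det_mx2E (R : comNzRingType) (a b c d : R) :
  \det (mx2 [:: [:: a; b]; [:: c; d]]) = a * d - b * c.
Proof.
rewrite (expand_det_row _ ord0) !big_ord_recl big_ord0 /cofactor !det_mx11.
rewrite /mx2 !mxE /= /bump /= ?add0n ?addn0 ?expr0 ?expr1. ring.
Qed.

Lemma det_mx3E (R : comNzRingType) (a b c d e f g h i : R) :
  \det (mx3 [:: [:: a; b; c]; [:: d; e; f]; [:: g; h; i]]) =
  a * (e * i - f * h) - b * (d * i - f * g) + c * (d * h - e * g).
Proof.
rewrite (expand_det_row _ ord0) !big_ord_recl big_ord0 /cofactor.
rewrite !(expand_det_row _ ord0) !big_ord_recl big_ord0 /cofactor !det_mx11.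
rewrite /mx3 !mxE /= /bump /= ?add0n ?addn0 ?expr0 ?expr1 ?exprS ?expr0 ?big_ord0. ring.
Qed.

Section Act.
Variable C : fieldType.
Implicit Types (w : nat -> C) (p q : {poly C}).

Lemma actE w p N : (size p <= N)%N -> act w p = \sum_(i < N) p`_i * w i.
Proof.
move=> HN; rewrite /act (big_ord_widen _ (fun i => p`_i * w i) HN) big_mkcond /=.
apply: eq_bigr => i _; case: ifP => // /negbT; rewrite -leqNgt => Hi.
by rewrite nth_default // mul0r.
Qed.

Lemma act0 w : act w 0 = 0.
Proof. by rewrite /act size_poly0 big_ord0. Qed.

Lemma actD w p q : act w (p + q) = act w p + act w q.
Proof.
set N := maxn (size p) (size q).
rewrite (actE w (size_polyD p q)) (@actE w p N) ?leq_maxl // (@actE w q N) ?leq_maxr //.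
by rewrite -big_split /=; apply: eq_bigr => i _; rewrite coefD mulrDl.
Qed.

Lemma actZ w a p : act w (a *: p) = a * act w p.
Proof.
rewrite (actE w (size_scale_leq a p)) /act mulr_sumr.
by apply: eq_bigr => i _; rewrite coefZ mulrA.
Qed.

Lemma actN w p : act w (- p) = - act w p.
Proof. by rewrite -scaleN1r actZ mulN1r. Qed.

Lemma actB w p q : act w (p - q) = act w p - act w q.
Proof. by rewrite actD actN. Qed.

Lemma act_sum w (I : Type) (r : seq I) (Pr : pred I) (F : I -> {poly C}) :
  act w (\sum_(i <- r | Pr i) F i) = \sum_(i <- r | Pr i) act w (F i).
Proof. exact: (big_morph (act w) (actD w) (act0 w)). Qed.

Lemma actXn w k : act w 'X^k = w k.
Proof.
rewrite /act size_polyXn big_ord_recr /= big1 ?add0r.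
  by rewrite coefXn eqxx mul1r.
by move=> i _; rewrite coefXn (ltn_eqF (ltn_ord i)) mul0r.
Qed.

Lemma poly_expand p N : (size p <= N)%N -> p = \sum_(i < N) p`_i *: 'X^i.
Proof.
move=> HN; rewrite -poly_def; apply/polyP => i; rewrite coef_poly.
case: ifP => // /negbT; rewrite -leqNgt => Hi.
by rewrite nth_default // (leq_trans HN Hi).
Qed.

Lemma act_mulXn w p j N : (size p <= N)%N ->
  act w (p * 'X^j) = \sum_(i < N) p`_i * w (i + j)%N.
Proof.
move=> HN; rewrite {1}(poly_expand HN) mulr_suml act_sum.
by apply: eq_bigr => i _; rewrite -scalerAl -exprD actZ actXn.
Qed.

Definition ortho w n p := forall q, (size q <= n)%N -> act w (p * q) = 0.

Lemma orthoP w n p : (forall j, (j < n)%N -> act w (p * 'X^j) = 0) -> ortho w n p.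
Proof.
move=> H q Hq; rewrite (poly_expand Hq) mulr_sumr act_sum big1 // => j _.
by rewrite -scalerAr actZ H ?mulr0 // (leq_trans (ltn_ord j) Hq).
Qed.

Lemma hankel0P w n :
  \det (hankel w n) = 0 <-> exists2 p : {poly C}, p != 0 & (size p <= n)%N /\ ortho w n p.
Proof.
split.
  case: n => [|n]; first by move/eqP; rewrite det_mx00 oner_eq0.
  move/eqP/det0P => [v vn0 Hv]; exists (\poly_(i < n.+1) v 0 (inord i)).
    apply: contra vn0 => /eqP H; apply/eqP/rowP => i.
    by move/polyP: H => /(_ i); rewrite coef_poly ltn_ord inord_val !mxE coef0.
  split; first exact: size_poly.
  apply: orthoP => j Hj; rewrite (act_mulXn _ _ (size_poly _ _)).
  transitivity ((v *m hankel w n.+1) 0 (Ordinal Hj)); last by rewrite Hv mxE.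
  by rewrite !mxE; apply: eq_bigr => i _; rewrite coef_poly ltn_ord inord_val !mxE.
move=> [p pn0 [Hs Ho]]; apply/eqP/det0P; exists (\row_(i < n) p`_i).
  apply: contra pn0 => /eqP H; apply/eqP/polyP => i; rewrite coef0.
  case: (ltnP i n) => Hi; last by rewrite nth_default // (leq_trans Hs Hi).
  by move/rowP: H => /(_ (Ordinal Hi)); rewrite !mxE.
apply/rowP => j; rewrite !mxE.
transitivity (act w (p * 'X^j)); last by apply: Ho; rewrite size_polyXn ltn_ord.
rewrite (act_mulXn _ _ Hs); apply: eq_bigr => i _; by rewrite !mxE.
Qed.

End Act.

Section Basis.
Variable C : fieldType.
Variable B : nat -> {poly C}.
Hypothesis Bm : forall k, B k \is monic.
Hypothesis Bs : forall k, size (B k) = k.+1.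

Lemma B_coef k : (B k)`_k = 1.
Proof. by have := monicP (Bm k); rewrite lead_coefE Bs. Qed.

Lemma B_coef_hi k j : (k < j)%N -> (B k)`_j = 0.
Proof. by move=> H; rewrite nth_default // Bs. Qed.

Lemma B_neq0 k : B k != 0.
Proof. by rewrite -size_poly_eq0 Bs. Qed.

Lemma decomp m (q : {poly C}) : (size q <= m.+1)%N ->
  exists a : C, exists2 r : {poly C}, (size r <= m)%N & q = a *: B m + r.
Proof.
move=> Hq; exists q`_m, (q - q`_m *: B m); last by rewrite addrC subrK.
apply/leq_sizeP => j Hj; rewrite coefB coefZ.
case: (ltngtP m j) Hj => // [Hmj|<-] _; last by rewrite B_coef mulr1 subrr.
by rewrite B_coef_hi // mulr0 subr0; move/leq_sizeP: Hq; apply.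
Qed.

Lemma span (Pr : {poly C} -> Prop) :
  Pr 0 -> (forall p q, Pr p -> Pr q -> Pr (p + q)) ->
  (forall a p, Pr p -> Pr (a *: p)) ->
  forall m, (forall k, (k < m)%N -> Pr (B k)) ->
  forall q : {poly C}, (size q <= m)%N -> Pr q.
Proof.
move=> H0 HD HZ; elim=> [|m IH] HB q Hq.
  by move: Hq; rewrite leqn0 size_poly_eq0 => /eqP ->.
have [a [r Hr ->]] := decomp Hq.
by apply: HD; [apply: HZ; apply: HB | apply: IH => // k Hk; apply: HB; apply: ltnW].
Qed.

Lemma monic_size1 (p : {poly C}) : p \is monic -> size p = 1%N -> p = 1 :> {poly C}.
Proof.
move=> /monicP Hm Hs; rewrite (size1_polyC (eq_leq Hs)).
by move: Hm; rewrite lead_coefE Hs => ->.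
Qed.

End Basis.

Section Ortho.
Variable C : fieldType.
Implicit Types (w : nat -> C) (p q : {poly C}).

Lemma ortho0 w n : ortho w n 0.
Proof. by move=> q _; rewrite mul0r act0. Qed.

Lemma orthoD w n p q : ortho w n p -> ortho w n q -> ortho w n (p + q).
Proof. by move=> Hp Hq r Hr; rewrite mulrDl actD Hp ?Hq ?addr0. Qed.

Lemma orthoZ w n a p : ortho w n p -> ortho w n (a *: p).
Proof. by move=> Hp r Hr; rewrite -scalerAl actZ Hp ?mulr0. Qed.

Lemma orthoN w n p : ortho w n p -> ortho w n (- p).
Proof. by move=> Hp; rewrite -scaleN1r; apply: orthoZ. Qed.

Lemma ortho_le w n m p : (m <= n)%N -> ortho w n p -> ortho w m p.
Proof. by move=> Hmn Hp q Hq; apply: Hp; apply: leq_trans Hmn. Qed.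

Lemma nondeg w n : \det (hankel w n) != 0 ->
  forall p, (size p <= n)%N -> ortho w n p -> p = 0.
Proof.
move=> Hd p Hs Ho; apply/eqP; apply: contraR Hd => Hp; apply/eqP.
by apply/hankel0P; exists p.
Qed.

Lemma SMOP_ortho w Q : is_SMOP w Q -> forall k, ortho w k (Q k).
Proof.
case=> Hm Hs Ho _ k.
apply: (span Hm Hs (Pr := fun q => act w (Q k * q) = 0)).
- by rewrite mulr0 act0.
- by move=> p q Hp Hq; rewrite mulrDr actD Hp Hq addr0.
- by move=> a p Hp; rewrite -scalerAr actZ Hp mulr0.
- by move=> j Hj; apply: Ho => Hkj; rewrite Hkj ltnn in Hj.
Qed.

End Ortho.

Section Main.
Variable C : fieldType.
Variables (u uh : nat -> C) (P P1 : nat -> {poly C}) (a b : nat -> C) (c : C).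
Hypothesis Hu : quasi_definite u.
Hypothesis HP : is_SMOP u P.
Hypothesis HT : TTRR P a b.
Hypothesis HA : assoc_first_kind a b P1.
Hypothesis Hrel : forall p : {poly C}, act u p = act uh (('X - c%:P) ^+ 2 * p).

Let Pm : forall k, P k \is monic. Proof. by case: HP. Qed.
Let Ps : forall k, size (P k) = k.+1. Proof. by case: HP. Qed.

Lemma P0 : P 0%N = 1.
Proof. exact: monic_size1 (Pm 0) (Ps 0). Qed.

Lemma P1E : P 1%N = 'X - (b 0%N)%:P.
Proof. by case: HT => H _; move: H; rewrite P0 mulr1 => ->; rewrite alg_polyC addrK. Qed.

Lemma PrecE n : P n.+2 = 'X * P n.+1 - b n.+1 *: P n.+1 - a n.+1 *: P n.
Proof. by case: HT => _ H; rewrite H -!mul_polyC; ring. Qed.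

Lemma Portho k : ortho u k (P k).
Proof. exact: SMOP_ortho HP k. Qed.

Lemma u_nondeg n (p : {poly C}) : (size p <= n)%N -> ortho u n p -> p = 0.
Proof.
case: n => [|n]; first by rewrite leqn0 size_poly_eq0 => /eqP.
exact: (nondeg (Hu n) (p:=p)).
Qed.


Lemma P1mrec n : P1m P1 n.+2 =
  'X * P1m P1 n.+1 - b n.+1 *: P1m P1 n.+1 - a n.+1 *: P1m P1 n.
Proof.
case: HA => H0 H1 H2; case: n => [|n] /=.
  by rewrite scaler0 subr0 H1 addrK.
by rewrite H2 -!mul_polyC; ring.
Qed.

Lemma SnrecE n : Sn u uh c P P1 n.+2 =
  ('X - (b n.+1)%:P) * Sn u uh c P P1 n.+1 - a n.+1 *: Sn u uh c P P1 n.
Proof.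
rewrite /Sn PrecE P1mrec -!mul_polyC.
ring.
Qed.


Lemma act1 (w : nat -> C) : act w 1 = w 0%N.
Proof. by have := actXn w 0; rewrite expr0. Qed.

Lemma actX (w : nat -> C) : act w 'X = w 1%N.
Proof. by have := actXn w 1; rewrite expr1. Qed.

Lemma actC (w : nat -> C) k : act w k%:P = k * w 0%N.
Proof. by rewrite -alg_polyC actZ act1. Qed.

Lemma uP_succ k : act u (P k.+1) = 0.
Proof. by rewrite -(mulr1 (P k.+1)); apply: Portho; rewrite size_poly1. Qed.

Definition sgm k := act uh (('X - c%:P) * P k).
Definition tu k := act uh (P k).

Lemma sgm_rec n : sgm n.+2 = (c - b n.+1) * sgm n.+1 - a n.+1 * sgm n.
Proof.
rewrite /sgm PrecE.
have -> : ('X - c%:P) * ('X * P n.+1 - b n.+1 *: P n.+1 - a n.+1 *: P n) =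
  ('X - c%:P)^+2 * P n.+1 + (c - b n.+1) *: (('X - c%:P) * P n.+1)
  - a n.+1 *: (('X - c%:P) * P n).
  by rewrite -!mul_polyC polyCB; ring.
by rewrite actB actD !actZ -Hrel uP_succ add0r.
Qed.

Lemma tu_rec n : tu n.+2 = sgm n.+1 + (c - b n.+1) * tu n.+1 - a n.+1 * tu n.
Proof.
rewrite /tu /sgm PrecE.
have -> : 'X * P n.+1 - b n.+1 *: P n.+1 - a n.+1 *: P n =
  ('X - c%:P) * P n.+1 + (c - b n.+1) *: P n.+1 - a n.+1 *: P n.
  by rewrite -!mul_polyC polyCB; ring.
by rewrite actB actD !actZ.
Qed.

Lemma Sn_ev_rec n : (Sn u uh c P P1 n.+2).[c] =
  (c - b n.+1) * (Sn u uh c P P1 n.+1).[c] - a n.+1 * (Sn u uh c P P1 n).[c].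
Proof. by rewrite SnrecE !hornerE. Qed.

Lemma Sn_der_rec n : (Sn u uh c P P1 n.+2)^`().[c] =
  (Sn u uh c P P1 n.+1).[c] + (c - b n.+1) * (Sn u uh c P P1 n.+1)^`().[c]
  - a n.+1 * (Sn u uh c P P1 n)^`().[c].
Proof. rewrite SnrecE /Sn !derivE !hornerE; ring. Qed.

Lemma P_ev_rec n : (P n.+2).[c] = (c - b n.+1) * (P n.+1).[c] - a n.+1 * (P n).[c].
Proof. rewrite PrecE !hornerE; ring. Qed.

Lemma sgmtu n : sgm n = (Sn u uh c P P1 n).[c] /\ tu n = Tn u uh c P P1 n.
Proof.
suff H : forall n, (sgm n = (Sn u uh c P P1 n).[c] /\ tu n = Tn u uh c P P1 n) /\
  (sgm n.+1 = (Sn u uh c P P1 n.+1).[c] /\ tu n.+1 = Tn u uh c P P1 n.+1).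
  by case: (H n).
clear n.
elim=> [|n [[IH1 IH2] [IH3 IH4]]].
  have HA1 : P1 0%N = 1 by case: HA.
  rewrite /sgm /tu /Tn /Sn /= P1E P0 mulr1 HA1 !derivE !hornerE !actB !actX !actC.
  have -> : ('X - c%:P) * ('X - (b 0%N)%:P) = ('X - c%:P)^+2 * 1 + (c - b 0%N) *: ('X - c%:P).
    by rewrite -!mul_polyC polyCB; ring.
  rewrite actD actZ -Hrel act1 actB actX actC; split; split; ring.
split; first by split.
split.
  by rewrite sgm_rec Sn_ev_rec IH1 IH3.
rewrite tu_rec /Tn Sn_der_rec P_ev_rec IH3 IH2 IH4 /Tn; ring.
Qed.


Lemma SnE k : (Sn u uh c P P1 k).[c] = sgm k.
Proof. by case: (sgmtu k). Qed.
Lemma TnE k : Tn u uh c P P1 k = tu k.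
Proof. by case: (sgmtu k). Qed.

Lemma orth_test m (p : {poly C}) : ortho u m p -> act uh p = 0 ->
  act uh (('X - c%:P) * p) = 0 -> ortho uh m.+2 p.
Proof.
move=> Ho H0 H1 q Hq.
set q1 := q %/ ('X - c%:P); set q2 := q1 %/ ('X - c%:P).
have E1 : q = q1 * ('X - c%:P) + (q.[c])%:P.
  by rewrite {1}(divp_eq q ('X - c%:P)) modp_XsubC.
have E2 : q1 = q2 * ('X - c%:P) + (q1.[c])%:P.
  by rewrite {1}(divp_eq q1 ('X - c%:P)) modp_XsubC.
have Hs2 : (size q2 <= m)%N.
  rewrite /q2 size_divp ?polyXsubC_eq0 // size_XsubC /q1 size_divp ?polyXsubC_eq0 //.
  rewrite size_XsubC /=; change (size q - 1 - 1 <= m)%N; lia.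
rewrite {1}E1 {1}E2.
have -> : p * ((q2 * ('X - c%:P) + (q1.[c])%:P) * ('X - c%:P) + (q.[c])%:P) =
  ('X - c%:P)^+2 * (p * q2) + q1.[c] *: (('X - c%:P) * p) + q.[c] *: p.
  by rewrite -!mul_polyC; ring.
by rewrite !actD !actZ -Hrel H0 H1 Ho // !mulr0 !addr0.
Qed.

Lemma ortho_conv m (p : {poly C}) : ortho uh m.+2 p ->
  [/\ ortho u m p, act uh p = 0 & act uh (('X - c%:P) * p) = 0].
Proof.
move=> Ho; split.
- move=> r Hr; rewrite Hrel mulrCA; apply: Ho.
  apply: (leq_trans (size_polyMleq _ _)); rewrite size_exp_XsubC /=; change ((size r).+2 <= m.+2)%N; lia.
- by rewrite -(mulr1 p); apply: Ho; rewrite size_poly1.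
- by rewrite mulrC; apply: Ho; rewrite size_XsubC.
Qed.

Lemma dstarE m : dstar u uh c P P1 m.+2 = sgm m * tu m.+1 - sgm m.+1 * tu m.
Proof.
rewrite /dstar /=.
have -> : (m.+2 - 2 = m)%N by lia.
have -> : (m.+2 - 1 = m.+1)%N by lia.
by rewrite det_mx2E !SnE !TnE.
Qed.

Lemma ker2 (s1 s0 t1 t0 : C) : s0 * t1 - s1 * t0 = 0 ->
  exists al : C, exists be : C,
    [/\ (al != 0) || (be != 0), al * s1 + be * s0 = 0 & al * t1 + be * t0 = 0].
Proof.
move=> Hd.
have [Hs|Hs] := boolP ((s0 != 0) || (s1 != 0)).
  exists s0, (- s1); split => //; first by rewrite oppr_eq0.
    by rewrite mulNr mulrC subrr.
  by rewrite mulNr -Hd mulrC.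
move: Hs; rewrite negb_or !negbK => /andP [/eqP s00 /eqP s10].
have [Ht|Ht] := boolP ((t0 != 0) || (t1 != 0)).
  exists t0, (- t1); split => //; first by rewrite oppr_eq0.
    by rewrite s00 s10 !mulr0 addr0.
  by rewrite mulNr mulrC subrr.
move: Ht; rewrite negb_or !negbK => /andP [/eqP t00 /eqP t10].
exists 1, 0; split; first by rewrite oner_eq0.
  by rewrite s10 s00 !mulr0 addr0.
by rewrite t10 t00 !mulr0 addr0.
Qed.

Lemma comb_ortho m (al be : C) : ortho u m (al *: P m.+1 + be *: P m).
Proof.
apply: orthoD; apply: orthoZ; last exact: Portho.
by apply: (ortho_le (leqnSn m)); apply: Portho.
Qed.

Lemma degen_dstar m :
  (exists2 p : {poly C}, p != 0 & (size p <= m.+2)%N /\ ortho uh m.+2 p) <->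
  dstar u uh c P P1 m.+2 = 0.
Proof.
rewrite dstarE; split.
  move=> [p pn0 [Hs Ho]]; have [Hou H0 H1] := ortho_conv Ho.
  have [al [r Hr Ep]] := decomp Pm Ps Hs.
  have [be [r' Hr' Er]] := decomp Pm Ps Hr.
  have r'0 : r' = 0.
    apply: (u_nondeg Hr').
    have -> : r' = p - (al *: P m.+1 + be *: P m).
      by rewrite Ep Er -!mul_polyC; ring.
    by apply: orthoD => //; apply: orthoN; apply: comb_ortho.
  move: Ep; rewrite Er r'0 addr0 => Ep.
  move: H0 H1; rewrite Ep mulrDr -!scalerAr !actD !actZ -/(sgm _) -/(sgm _) -/(tu _) -/(tu _).
  move=> E0 E1.
  apply/eqP; apply: contraR pn0 => Hd.
  have Ea : al * (sgm m * tu m.+1 - sgm m.+1 * tu m) =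
    sgm m * (al * tu m.+1 + be * tu m) - tu m * (al * sgm m.+1 + be * sgm m) by ring.
  have Eb : be * (sgm m * tu m.+1 - sgm m.+1 * tu m) =
    tu m.+1 * (al * sgm m.+1 + be * sgm m) - sgm m.+1 * (al * tu m.+1 + be * tu m) by ring.
  rewrite E0 E1 !mulr0 subrr in Ea Eb.
  move/eqP: Ea; rewrite mulf_eq0 (negbTE Hd) orbF => /eqP al0.
  move/eqP: Eb; rewrite mulf_eq0 (negbTE Hd) orbF => /eqP be0.
  by rewrite Ep al0 be0 !scale0r addr0.
move=> Hd; have [al [be [Hn E1 E0]]] := ker2 Hd.
exists (al *: P m.+1 + be *: P m).
  case: (eqVneq al 0) => [al0|aln0].
    move: Hn; rewrite al0 eqxx /= => ben0.
    by rewrite scale0r add0r scale_poly_eq0 negb_or ben0 B_neq0.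
  apply/eqP => E; move/polyP: E => /(_ m.+1).
  rewrite coef0 coefD !coefZ B_coef // B_coef_hi // mulr0 addr0 mulr1 => al0.
  by rewrite al0 eqxx in aln0.
split.
  apply: (leq_trans (size_polyD _ _)); rewrite geq_max.
  by rewrite !(leq_trans (size_scale_leq _ _)) // Ps.
apply: orth_test; first exact: comb_ortho.
  by rewrite /tu in E1 E0; rewrite !actD !actZ E0.
by rewrite /sgm in E1 E0; rewrite mulrDr -!scalerAr !actD !actZ E1.
Qed.


Lemma hankel1 (w : nat -> C) : \det (hankel w 1) = w 0%N.
Proof. by rewrite det_mx11 mxE. Qed.

Lemma quasi_uh_iff : quasi_definite uh <->
  (uh 0%N != 0 /\ forall n : nat, (2 <= n)%N -> dstar u uh c P P1 n != 0).
Proof.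
split.
  move=> Hq; split; first by have := Hq 0%N; rewrite hankel1.
  case=> [|[|m]] // _; apply/eqP => /degen_dstar Hd.
  by move: (Hq m.+1) => /eqP; apply; apply/hankel0P.
case=> H0 Hd; case=> [|m]; first by rewrite hankel1.
apply/eqP => /hankel0P /degen_dstar; apply/eqP; exact: Hd.
Qed.

Lemma Qformula : quasi_definite uh ->
   forall Q : nat -> {poly C}, is_SMOP uh Q ->
     [/\ Q 0%N = 1,
         Q 1%N = 'X - (uh 1%N / uh 0%N)%:P
       & forall n : nat, (2 <= n)%N ->
           Q n = (dstar u uh c P P1 n)^-1 *: Qdet u uh c P P1 n].
Proof.
move=> Hq Q HQ; have [Qm Qs Qo _] := HQ.
have [uh0 Hd] := proj1 quasi_uh_iff Hq.
have Q0 : Q 0%N = 1 by exact: monic_size1 (Qm 0%N) (Qs 0%N).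
split => //.
  have E : Q 1%N = 'X + ((Q 1%N)`_0)%:P.
    apply/polyP => i; rewrite coefD coefX coefC.
    case: i => [|[|i]] /=; first by rewrite add0r.
      by rewrite (B_coef Qm Qs) addr0.
    by rewrite addr0 (B_coef_hi Qs).
  have := Qo 1%N 0%N (fun H => ltac:(discriminate H)).
  rewrite Q0 mulr1 E actD actX actC => H.
  rewrite {1}E -polyCN; congr (_ + _%:P).
  apply: (mulIf uh0); rewrite mulNr divfK //.
  by apply/eqP; rewrite -addr_eq0 addrC coefD coefX coefC /= add0r H.
case=> [|[|m]] // _.
have Hdm := Hd m.+2 isT; move: Hdm; rewrite dstarE => Hdm.
set dd := sgm m * tu m.+1 - sgm m.+1 * tu m.
set e := - (tu m.+2 * sgm m - tu m * sgm m.+2).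
set f := tu m.+2 * sgm m.+1 - tu m.+1 * sgm m.+2.
have EQ : Qdet u uh c P P1 m.+2 = dd *: P m.+2 + e *: P m.+1 + f *: P m.
  rewrite /Qdet /=.
  have -> : (m.+2 - 2 = m)%N by lia.
  have -> : (m.+2 - 1 = m.+1)%N by lia.
  rewrite det_mx3E !SnE !TnE /dd /e /f -!mul_polyC !(polyCB, polyCM, polyCN); ring.
rewrite EQ; apply/eqP; rewrite -subr_eq0; apply/eqP.
have Hnd := nondeg (Hq m.+1); apply: Hnd.
  apply/leq_sizeP => j Hj; rewrite coefB coefZ !coefD !coefZ.
  case: (ltngtP m.+2 j) Hj => // [Hmj|<-] _.
    have h1 : (m.+1 < j)%N by lia.
    have h0 : (m < j)%N by lia.
    rewrite (B_coef_hi Qs Hmj) (B_coef_hi Ps Hmj) (B_coef_hi Ps h1) (B_coef_hi Ps h0).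
    by rewrite !mulr0 !addr0 mulr0 subr0.
  rewrite (B_coef Qm Qs) (B_coef Pm Ps) !(B_coef_hi Ps) //.
  by rewrite !mulr0 !addr0 mulr1 mulVf ?subrr.
apply: orthoD; first exact: SMOP_ortho HQ _.
apply: orthoN; apply: orthoZ; apply: orth_test.
- apply: orthoD; first apply: orthoD.
  + by apply: orthoZ; apply: (ortho_le (n:=m.+2)); [lia | apply: Portho].
  + by apply: orthoZ; apply: (ortho_le (n:=m.+1)); [lia | apply: Portho].
  + by apply: orthoZ; apply: Portho.
- rewrite !actD !actZ /dd /e /f /tu /sgm; ring.
- rewrite !mulrDr -!scalerAr !actD !actZ /dd /e /f /tu /sgm; ring.
Qed.

End Main.

Unset Implicit Arguments.
Local Open Scope complex_scope.

Theorem mainTheorem3 (R : realType) (u uh : nat -> R[i])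
  (P P1 : nat -> {poly R[i]}) (a b : nat -> R[i]) (c : R[i]) :
  quasi_definite u ->
  is_SMOP u P ->
  TTRR P a b ->
  assoc_first_kind a b P1 ->
  (forall p : {poly R[i]}, act u p = act uh (('X - c%:P) ^+ 2 * p)) ->
  (quasi_definite uh <->
     (uh 0%N != 0 /\ forall n : nat, (2 <= n)%N -> dstar u uh c P P1 n != 0))
  /\
  (quasi_definite uh ->
   forall Q : nat -> {poly R[i]}, is_SMOP uh Q ->
     [/\ Q 0%N = 1,
         Q 1%N = 'X - (uh 1%N / uh 0%N)%:P
       & forall n : nat, (2 <= n)%N ->
           Q n = (dstar u uh c P P1 n)^-1 *: Qdet u uh c P P1 n]).
Proof.
move=> Hu HP HT HA Hrel; split.
  exact: (quasi_uh_iff Hu HP HT HA Hrel).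
exact: (Qformula Hu HP HT HA Hrel).
Qed.
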